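(* Let $\mathfrak{g}_\alpha$, $-1\le\alpha\le1$, be the eight-dimensional real Lie algebras with basis $\{X_1,\dots,X_8\}$ and nonzero brackets $[X_1,X_2]=2X_2$, $[X_1,X_3]=-2X_3$, $[X_2,X_3]=X_1$, $[X_1,X_4]=X_4$, $[X_1,X_5]=-X_5$, $[X_1,X_6]=X_6$, $[X_1,X_7]=-X_7$, $[X_2,X_5]=X_4$, $[X_2,X_7]=X_6$, $[X_3,X_4]=X_5$, $[X_3,X_6]=X_7$, $[X_4,X_8]=X_4$, $[X_5,X_8]=X_5$, $[X_6,X_8]=\alpha X_6$, $[X_7,X_8]=\alpha X_7$. Then every $\mathfrak{g}_\alpha$ ($-1\le\alpha\le 1$) can be obtained as a linear deformation of $\mathfrak{g}_{-1}$. Moreover, no algebra $\mathfrak{g}_\alpha$ with $-1\le\alpha\le1$ contracts nontrivially onto $\mathfrak{g}_{-1}$.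
   Context: A linear deformation of a Lie algebra $\mathfrak{g}$ with bracket $[\cdot,\cdot]$ is a Lie algebra structure on the same vector space of the form $[X,Y]_t=[X,Y]+t\,\varphi(X,Y)$, where $t$ is a scalar and $\varphi$ is a skew-symmetric bilinear map which is a 2-cocycle of $\mathfrak{g}$ with values in the adjoint module and satisfies the integrability condition $\sum_{\sigma\in S_3}\varphi(X_{\sigma(i)},\varphi(X_{\sigma(j)},X_{\sigma(k)}))=0$, so that $[\cdot,\cdot]_t$ satisfies the Jacobi identity. Contraction: given a Lie algebra $\mathfrak{g}$ and invertible linear maps $\Phi_t$, $t\in[1,\infty)$, if $[X,Y]_\infty:=\lim_{t\to\infty}\Phi_t^{-1}[\Phi_t(X),\Phi_t(Y)]$ exists for all $X,Y$, it defines a Lie algebra $\mathfrak{g}'$, a contraction of $\mathfrak{g}$; it is nontrivial if $\mathfrak{g}'\not\cong\mathfrak{g}$. The algebras $\mathfrak{g}_\alpha$, $-1\le\alpha\le1$, are pairwise non-isomorphic. *)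

(* Defs.v *)
From HB Require Import structures.
From mathcomp Require Import all_boot all_order all_algebra.
From mathcomp Require Import all_classical all_reals all_analysis.
Set Implicit Arguments. Unset Strict Implicit. Unset Printing Implicit Defensive.
Import Order.TTheory GRing.Theory Num.Theory.
Import numFieldNormedType.Exports.
Local Open Scope classical_set_scope.
Local Open Scope ring_scope.

(* The underlying real vector space R^8, as row vectors; coordinate k (0-based)
   corresponds to the basis vector X_(k+1). *)
Definition V8 (R : realType) := 'rV[R]_8.

Definition bracket (R : realType) := V8 R -> V8 R -> V8 R.

Definition bilinear8 (R : realType) (b : bracket R) : Prop :=
  (forall a x y z, b (a *: x + y) z = a *: b x z + b y z) /\
  (forall a x y z, b x (a *: y + z) = a *: b x y + b x z).

Definition skew8 (R : realType) (b : bracket R) : Prop :=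
  forall x y, b x y = - b y x.

Definition jacobi8 (R : realType) (b : bracket R) : Prop :=
  forall x y z, b x (b y z) + b y (b z x) + b z (b x y) = 0.

Definition is_lie8 (R : realType) (b : bracket R) : Prop :=
  bilinear8 b /\ (forall x, b x x = 0) /\ jacobi8 b.

Definition lie_iso8 (R : realType) (b1 b2 : bracket R) : Prop :=
  exists A : 'M[R]_8, A \in unitmx /\
    forall x y, b1 x y *m A = b2 (x *m A) (y *m A).

Definition ev (R : realType) (k : nat) : V8 R := delta_mx 0 (inord k).

(* [X_(i+1), X_(j+1)] for i < j (0-based indices) in g_alpha *)
Definition gup (R : realType) (a : R) (i j : nat) : V8 R :=
  match i, j with
  | 0, 1 => 2 *: ev R 1
  | 0, 2 => - 2 *: ev R 2
  | 1, 2 => ev R 0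
  | 0, 3 => ev R 3
  | 0, 4 => - ev R 4
  | 0, 5 => ev R 5
  | 0, 6 => - ev R 6
  | 1, 4 => ev R 3
  | 1, 6 => ev R 5
  | 2, 3 => ev R 4
  | 2, 5 => ev R 6
  | 3, 7 => ev R 3
  | 4, 7 => ev R 4
  | 5, 7 => a *: ev R 5
  | 6, 7 => a *: ev R 6
  | _, _ => 0
  end.

Definition gcst (R : realType) (a : R) (i j : 'I_8) : V8 R :=
  if (i < j)%N then gup a i j
  else if (j < i)%N then - gup a j i else 0.

Definition gbr (R : realType) (a : R) : bracket R :=
  fun x y => \sum_(i < 8) \sum_(j < 8) (x 0 i * y 0 j) *: gcst a i j.

Definition cocycle8 (R : realType) (b phi : bracket R) : Prop :=
  forall x y z,
    b x (phi y z) + b y (phi z x) + b z (phi x y)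
    - phi (b x y) z - phi (b y z) x - phi (b z x) y = 0.

Definition deform (R : realType) (b phi : bracket R) (t : R) : bracket R :=
  fun x y => b x y + t *: phi x y.

Definition linear_deformation_of (R : realType) (b1 b2 : bracket R) : Prop :=
  exists phi : bracket R,
    bilinear8 phi /\ skew8 phi /\ cocycle8 b1 phi /\ jacobi8 phi /\
    exists t : R, lie_iso8 (deform b1 phi t) b2.

Definition transported (R : realType) (b : bracket R) (P : 'M[R]_8) : bracket R :=
  fun x y => b (x *m P) (y *m P) *m invmx P.

Definition contraction_limit (R : realType) (b : bracket R)
    (Phi : R -> 'M[R]_8) (L : bracket R) : Prop :=
  (forall t : R, 1 <= t -> Phi t \in unitmx) /\
  forall x y (k : 'I_8),
    (fun t : R => transported b (Phi t) x y 0 k) @ +oo --> L x y 0 k.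

(* Main.v *)
Require Import Defs.
From HB Require Import structures.
From mathcomp Require Import all_boot all_order all_algebra.
From mathcomp Require Import all_classical all_reals all_analysis.
From mathcomp Require Import ring lra.
Import Order.TTheory GRing.Theory Num.Theory.
Import numFieldNormedType.Exports.
Local Open Scope classical_set_scope.
Local Open Scope ring_scope.
Set Implicit Arguments. Unset Strict Implicit.


Section S.
Variable R : realType.

Lemma sum8 (F : 'I_8 -> R) : \sum_(i < 8) F i =
  F (inord 0) + F (inord 1) + F (inord 2) + F (inord 3) + F (inord 4)
  + F (inord 5) + F (inord 6) + F (inord 7).
Proof.
rewrite (eq_bigr (fun i : 'I_8 => F (inord i))); last by move=> i _; rewrite inord_val.
by rewrite !big_ord_recl big_ord0 /= addr0 !addrA.
Qed.

Definition cc (z : 'rV[R]_8) (i : nat) := z 0 (inord i).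
Definition bxc (a : R) (x y : 'rV[R]_8) (k : nat) : R :=
  match k with
  | 0%N => cc x 1 * cc y 2 - cc x 2 * cc y 1
  | 1%N => 2 * (cc x 0 * cc y 1) - 2 * (cc x 1 * cc y 0)
  | 2%N => - 2 * (cc x 0 * cc y 2) + 2 * (cc x 2 * cc y 0)
  | 3%N => cc x 0 * cc y 3 + cc x 1 * cc y 4 - cc x 3 * cc y 0 + cc x 3 * cc y 7 - cc x 4 * cc y 1 - cc x 7 * cc y 3
  | 4%N => - (cc x 0 * cc y 4) + cc x 2 * cc y 3 - cc x 3 * cc y 2 + cc x 4 * cc y 0 + cc x 4 * cc y 7 - cc x 7 * cc y 4
  | 5%N => a * (cc x 5 * cc y 7) - a * (cc x 7 * cc y 5) + cc x 0 * cc y 5 + cc x 1 * cc y 6 - cc x 5 * cc y 0 - cc x 6 * cc y 1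
  | 6%N => a * (cc x 6 * cc y 7) - a * (cc x 7 * cc y 6) - cc x 0 * cc y 6 + cc x 2 * cc y 5 - cc x 5 * cc y 2 + cc x 6 * cc y 0
  | _ => 0
  end.

Definition bx (a : R) (x y : 'rV[R]_8) : 'rV[R]_8 := \row_(k < 8) bxc a x y k.

Definition d (m k : nat) : R := (m == k)%:R.
Definition gupc (a : R) (i j k : nat) : R :=
  match i, j with
  | 0%N, 1%N => 2 * d 1 k
  | 0%N, 2%N => - 2 * d 2 k
  | 1%N, 2%N => d 0 k
  | 0%N, 3%N => d 3 k
  | 0%N, 4%N => - d 4 k
  | 0%N, 5%N => d 5 k
  | 0%N, 6%N => - d 6 k
  | 1%N, 4%N => d 3 k
  | 1%N, 6%N => d 5 k
  | 2%N, 3%N => d 4 k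
  | 2%N, 5%N => d 6 k
  | 3%N, 7%N => d 3 k
  | 4%N, 7%N => d 4 k
  | 5%N, 7%N => a * d 5 k
  | 6%N, 7%N => a * d 6 k
  | _, _ => 0
  end.
Definition gc a i j k : R :=
  if (i < j)%N then gupc a i j k else if (j < i)%N then - gupc a j i k else 0.

Lemma evE (k j : nat) : (k < 8)%N -> (j < 8)%N -> ev R k 0 (inord j) = (k == j)%:R.
Proof.
move=> hk hj; rewrite /ev mxE /=.
by rewrite -val_eqE /= !inordK // eq_sym.
Qed.

Lemma gupE a i j k : (k < 8)%N -> gup a i j 0 (inord k) = gupc a i j k.
Proof.
move=> hk.
have E m : (m < 8)%N -> (inord k == inord m :> 'I_8) = (m == k).
  by move=> hm; rewrite -val_eqE /= !inordK // eq_sym.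
move: i j => [|[|[|[|[|[|[|[|i]]]]]]]] [|[|[|[|[|[|[|[|j]]]]]]]];
  rewrite /gup /gupc /d ?mxE //= E //.
Qed.

Lemma gcstE a i j k : (i < 8)%N -> (j < 8)%N -> (k < 8)%N ->
  gcst a (inord i) (inord j) 0 (inord k) = gc a i j k.
Proof.
move=> hi hj hk; rewrite /gcst /gc !inordK //.
case: ifP => _; first by rewrite gupE.
case: ifP => _; last by rewrite mxE.
by rewrite mxE gupE.
Qed.

Lemma gbr_entry a x y k : gbr a x y 0 k = \sum_i \sum_j x 0 i * y 0 j * @gcst R a i j 0 k.
Proof.
rewrite /gbr summxE; apply: eq_bigr => i _; rewrite summxE; apply: eq_bigr => j _.
by rewrite mxE.
Qed.

Lemma gbrE a x y : gbr a x y = bx a x y.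
Proof.
apply/rowP => k; rewrite /bx mxE gbr_entry -(inord_val k).
have := ltn_ord k; move: (nat_of_ord k) => n hn.
rewrite inordK //.
rewrite sum8; rewrite !sum8.
rewrite !gcstE //.
(move: n hn => [|[|[|[|[|[|[|[|n]]]]]]]] hn //; rewrite /gc /gupc /d /bxc /cc /=; ring).
Qed.

Definition phic (x y : 'rV[R]_8) (k : nat) : R :=
  match k with
  | 5%N => cc x 5 * cc y 7 - cc x 7 * cc y 5
  | 6%N => cc x 6 * cc y 7 - cc x 7 * cc y 6
  | _ => 0
  end.
Definition phi (x y : 'rV[R]_8) : 'rV[R]_8 := \row_(k < 8) phic x y k.

Lemma rowP8 (u v : 'rV[R]_8) : (forall n, (n < 8)%N -> u 0 (inord n) = v 0 (inord n)) -> u = v.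
Proof.
move=> H; apply/rowP => k; rewrite -(inord_val k); exact: H.
Qed.

Ltac crunch := apply: rowP8; intros n hn; rewrite /bx /phi !mxE !inordK //;
  revert n hn; intros [|[|[|[|[|[|[|[|n]]]]]]]] hn; try done;
  rewrite /bxc /phic /cc /= ?mxE ?inordK //= /bxc /phic /cc /= ?mxE ?inordK //=;
  rewrite /bxc /phic /cc /= ?mxE ?inordK //=; ring.

Lemma part1 a : linear_deformation_of (@gbr R (-1)) (gbr a).
Proof.
exists phi; split; [|split; [|split; [|split]]].
- split => al x y z; crunch.
- move=> x y; crunch.
- move=> x y z; rewrite !gbrE; crunch.
- move=> x y z; crunch.
- exists (a + 1); exists 1%:M; split; first exact: unitmx1.
  move=> x y; rewrite !mulmx1 /deform !gbrE; crunch.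
Qed.
End S.

Section G.
Variable R : realType.
Local Notation V := ('rV[R]_8).
Definition e (k : 'I_8) : V := delta_mx 0 k.
Definition Etr (b : bracket R) x := \sum_(k < 8) b x (e k) 0 k.
Definition Eb (b : bracket R) x y := \sum_(k < 8) \sum_(j < 8) b y (e k) 0 j * b x (e j) 0 k.
Definition Kb (b : bracket R) x y := \sum_(k < 8) b x (b y (e k)) 0 k.
Definition islin (f : V -> V) := forall c u v, f (c *: u + v) = c *: f u + f v.
Definition lin2 (b : bracket R) := forall x, islin (b x).

Lemma lin_sum f (c : 'I_8 -> R) : islin f -> f (\sum_j c j *: e j) = \sum_j c j *: f (e j).
Proof.
move=> fl.
have f0 : f 0 = 0 by have := fl (-1) 0 0; rewrite scaler0 addr0 scaleN1r addNr.
apply: (big_rec2 (fun A B => f A = B)) => // i y1 y2 _ <-.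
exact: fl.
Qed.

Lemma lin_rv f : islin f -> forall v, f v = v *m \matrix_(i, j) f (e i) 0 j.
Proof.
move=> fl v; rewrite {1}[v]row_sum_delta lin_sum // mulmx_sum_row.
apply: eq_bigr => i _; congr (_ *: _); apply/rowP => j; by rewrite !mxE.
Qed.

Lemma trace_conj f (P : 'M[R]_8) : islin f -> P \in unitmx ->
  \sum_k (f (e k *m P) *m invmx P) 0 k = \sum_k f (e k) 0 k.
Proof.
move=> fl uP.
set M := \matrix_(i, j) f (e i) 0 j.
have E1 k : (f (e k *m P) *m invmx P) 0 k = (P *m M *m invmx P) k k.
  by rewrite (lin_rv fl) /e -!mulmxA -rowE !mxE.
have E2 k : f (e k) 0 k = M k k by rewrite mxE.
under eq_bigr do rewrite E1.
under [RHS]eq_bigr do rewrite E2.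
rewrite -/(\tr _) -/(\tr M) mxtrace_mulC mulmxA mulVmx // mul1mx.
reflexivity.
Qed.

Lemma islin_comp f g : islin f -> islin g -> islin (fun v => f (g v)).
Proof. by move=> fl gl c u v /=; rewrite gl fl. Qed.

Lemma transp_lin2 b P : lin2 b -> lin2 (transported b P).
Proof.
move=> bl x c u v; rewrite /transported mulmxDl -scalemxAl bl mulmxDl -scalemxAl //.
Qed.

Lemma Ktransport b P x y : lin2 b -> P \in unitmx ->
  Kb (transported b P) x y = Kb b (x *m P) (y *m P).
Proof.
move=> bl uP; rewrite /Kb /transported.
under eq_bigr do rewrite mulmxKV //.
rewrite (trace_conj (f := fun v => b (x *m P) (b (y *m P) v))) //.
exact: islin_comp.
Qed.

Lemma Ttransport b P x : lin2 b -> P \in unitmx ->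
  Etr (transported b P) x = Etr b (x *m P).
Proof.
move=> bl uP; rewrite /Etr /transported.
by rewrite (trace_conj (f := fun v => b (x *m P) v)).
Qed.

Lemma Eb_K b x y : lin2 b -> Eb b x y = Kb b x y.
Proof.
move=> bl; rewrite /Eb /Kb; apply: eq_bigr => k _.
rewrite {2}[b y (e k)]row_sum_delta lin_sum // summxE.
by apply: eq_bigr => j _; rewrite mxE.
Qed.

Lemma cvg_sum_fun (T : Type) (F : set_system T) (FF : Filter F) (I : finType) (f : I -> T -> R) (l : I -> R) :
  (forall i, f i t @[t --> F] --> l i) -> (\sum_i f i t) @[t --> F] --> \sum_i l i.
Proof.
move=> H; apply: cvg_big => // ; exact: add_continuous.
Qed.

Lemma cvg_prod_fun (T : Type) (F : set_system T) (FF : Filter F) n (f : 'I_n -> T -> R) (l : 'I_n -> R) :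
  (forall i, f i t @[t --> F] --> l i) -> (\prod_i f i t) @[t --> F] --> \prod_i l i.
Proof.
move=> H; apply: cvg_big => // ; exact: mul_continuous.
Qed.

Lemma cvg_det (T : Type) (F : set_system T) (FF : Filter F) n (M : T -> 'M[R]_n) (M0 : 'M[R]_n) :
  (forall i j, M t i j @[t --> F] --> M0 i j) -> \det (M t) @[t --> F] --> \det M0.
Proof.
move=> H; rewrite /determinant; apply: cvg_sum_fun => s.
apply: cvgM; first exact: cvg_cst.
by apply: cvg_prod_fun => i.
Qed.
End G.

Section H.
Variable R : realType.

Lemma inord_eqE i j : (i < 8)%N -> (j < 8)%N -> (inord i == inord j :> 'I_8) = (i == j).
Proof. by move=> hi hj; rewrite -val_eqE /= !inordK. Qed.

Ltac crunch := apply: rowP8; intros n hn; rewrite /bx /phi !mxE !inordK //;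
  revert n hn; intros [|[|[|[|[|[|[|[|n]]]]]]]] hn; try done;
  rewrite /bxc /phic /cc /= ?mxE ?inordK //= /bxc /phic /cc /= ?mxE ?inordK //=;
  rewrite /bxc /phic /cc /= ?mxE ?inordK //=; ring.
Ltac simp := rewrite /bxc /cc /= ?mxE ?inordK //= ?inord_eqE //=.

Lemma gbr_lin2 (c : R) : lin2 (gbr c).
Proof. move=> x al u v; rewrite !gbrE; crunch. Qed.

Lemma Kg (c : R) v w : Kb (gbr c) v w = 12 * (cc v 0 * cc w 0) + 6 * (cc v 1 * cc w 2)
  + 6 * (cc v 2 * cc w 1) + 2 * (1 + c ^+ 2) * (cc v 7 * cc w 7).
Proof.
rewrite /Kb sum8 !gbrE /bx /e !mxE !inordK //.
simp; simp; simp; ring.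
Qed.

Lemma Tg (c : R) v : Etr (gbr c) v = - 2 * (1 + c) * cc v 7.
Proof.
rewrite /Etr sum8 !gbrE /bx /e !mxE !inordK //.
simp; simp; ring.
Qed.
End H.

Section P.
Variable R : realType.

Lemma det_low (N : 'M[R]_(4, 3)) (C : 'M[R]_(3, 4)) : \det (N *m C) = 0.
Proof.
apply/eqP; apply: contraT => h.
have : (N *m C) \in unitmx by rewrite unitmxE unitfE.
rewrite -row_free_unit /row_free => /eqP hr.
have := mxrankM_maxl N C; have := rank_leq_col N; rewrite hr => h1 h2.
by have := leq_trans h2 h1.
Qed.

Definition w (i : 'I_4) : 'rV[R]_8 :=
  match val i with
  | 0%N => e R (inord 0)
  | 1%N => e R (inord 1) + e R (inord 2)
  | 2%N => e R (inord 1) - e R (inord 2)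
  | _ => e R (inord 7)
  end.

Lemma part2 (a : R) (Phi : R -> 'M[R]_8) (L : bracket R) :
  contraction_limit (gbr a) Phi L -> lie_iso8 L (gbr (-1)) -> lie_iso8 L (gbr a).
Proof.
move=> [Hunit Hlim] Hiso.
have [->|ha] := eqVneq a (-1); first exact Hiso.
exfalso.
case: Hiso => A [uA HA].
have LE : L = transported (gbr (-1)) A.
  apply/funext => x; apply/funext => y; by rewrite /transported -HA mulmxK.
pose c := 2 * (1 + a) ^+ 2; pose d := 1 + a ^+ 2.
pose u i := w i *m invmx A.
pose Gm (b : bracket R) := \matrix_(i < 4, j < 4)
   (c * Eb b (u i) (u j) - d * Etr b (u i) * Etr b (u j)).
have hA : \det (Gm (transported (gbr a) (Phi t))) @[t --> +oo] --> \det (Gm L).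
  apply: cvg_det => i j; rewrite mxE; under eq_cvg do rewrite mxE.
  apply: cvgB.
  - apply: cvgM; first exact: cvg_cst.
    rewrite /Eb; apply: cvg_sum_fun => k; apply: cvg_sum_fun => l; apply: cvgM; exact: Hlim.
  - apply: cvgM; first (apply: cvgM; first exact: cvg_cst).
    + rewrite /Etr; apply: cvg_sum_fun => k; exact: Hlim.
    + rewrite /Etr; apply: cvg_sum_fun => k; exact: Hlim.
have h1 : 1 + a != 0 by apply: contra_neq ha => h; lra.
have hc : 0 < c by rewrite /c mulr_gt0 // exprn_even_gt0 //= h1 orbT.
have hB : \det (Gm L) != 0.
  rewrite LE.
  have hlin := transp_lin2 A (gbr_lin2 (-1)).
  pose dd (i : 'I_4) : R := match val i with 0%N => 12 | 1%N => 12 | 2%N => -12 | _ => 4 end.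
  suff -> : Gm (transported (gbr (-1)) A) = diag_mx (\row_i (c * dd i)).
    rewrite det_diag !big_ord_recl big_ord0 !mxE /dd /=.
    apply/eqP => h.
    have h4 : 0 < c ^+ 4 by rewrite exprn_gt0.
    have : -6912 * c ^+ 4 = 0 by rewrite -h; ring.
    lra.
  apply/matrixP => i j; rewrite !mxE Eb_K // Ktransport ?Ttransport //; try exact: gbr_lin2.
  rewrite /u !mulmxKV // Kg !Tg.
  case: i => [[|[|[|[|i]]]] hi] //; case: j => [[|[|[|[|j]]]] hj] //;
    rewrite /w /dd /cc /e /= ?mxE ?inord_eqE //= /c /d; ring.
have hC : \forall t \near +oo, \det (Gm (transported (gbr a) (Phi t))) = 0.
  near=> t.
  have ut : Phi t \in unitmx by apply: Hunit; near: t; apply: nbhs_pinfty_ge; exact: num_real.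
  pose v i := u i *m Phi t.
  pose N := \matrix_(i < 4, p < 3) cc (v i) p.
  pose Cm := \matrix_(p < 3, j < 4) (c * (if (p == 0 :> nat) then 12 * cc (v j) 0
     else if (p == 1 :> nat) then 6 * cc (v j) 2 else 6 * cc (v j) 1)).
  suff -> : Gm (transported (gbr a) (Phi t)) = N *m Cm by exact: det_low.
  apply/matrixP => i j; rewrite !mxE.
  rewrite Eb_K; last exact/transp_lin2/gbr_lin2.
  rewrite Ktransport ?Ttransport //; try exact: gbr_lin2.
  rewrite Kg !Tg !big_ord_recl big_ord0 !mxE /=.
  rewrite /c /d; ring.
have h0 : \det (Gm (transported (gbr a) (Phi t))) @[t --> +oo] --> 0.
  apply: cvg_trans (near_eq_cvg _) (cvg_cst 0).
  by near=> t; rewrite (near hC t).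
move/eqP: hB; apply.
by rewrite -(cvg_lim (@Rhausdorff R) hA) (cvg_lim (@Rhausdorff R) h0).
Unshelve. all: by end_near.
Qed.
End P.

Local Close Scope classical_set_scope.
Local Open Scope ring_scope.

Theorem corollary1 (R : realType) :
  (forall a : R, -1 <= a <= 1 -> linear_deformation_of (gbr (-1)) (gbr a)) /\
  (forall a : R, -1 <= a <= 1 ->
     forall (Phi : R -> 'M[R]_8) (L : bracket R),
       contraction_limit (gbr a) Phi L ->
       lie_iso8 L (gbr (-1)) -> lie_iso8 L (gbr a)).
Proof.
split => a _; first exact: part1.
move=> Phi L; exact: part2.
Qed.
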